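(* Let $(\mathbf{C},\mathcal{M})$ be a finitary $\mathcal{M}$-adhesive category with $\mathcal{M}$-effective unions, an $\mathcal{M}$-initial object $\varnothing$, an epi-$\mathcal{M}$-factorisation, existence of final pullback complements (FPCs) for all pairs of composable $\mathcal{M}$-morphisms, and stability of $\mathcal{M}$-morphisms under FPCs. Let $\mathcal{N}$ be a set of objects and $\mathsf{c}_{\mathcal{N}}$, $\mathcal{S}_{\mathcal{N}}$ as in the context. Let $r=(O\hookleftarrow K\hookrightarrow I)$ be a linear rule (a span of $\mathcal{M}$-morphisms) with $O,K,I\vDash\mathsf{c}_{\mathcal{N}}$. Define the condition $\mathsf{c}_I$ over $I$ as follows. For each $(C_2\hookleftarrow D\hookrightarrow C_1)\in\mathcal{S}_{\mathcal{N}}$ and each pullback embedding of $(C_2\hookleftarrow D)$ into $(O\hookleftarrow K)$, i.e. each pair of $\mathcal{M}$-morphisms $(C_2\hookrightarrow O)$, $(D\hookrightarrow K)$ such that the square $D\to C_2\to O$, $D\to K\to O$ commutes and is a pullback, form the pushout $(C_1\hookrightarrow P\hookleftarrow I)$ of the span $(C_1\hookleftarrow D\hookrightarrow K\hookrightarrow I)$; if $P\vDash\mathsf{c}_{\mathcal{N}}$, this pullback embedding contributes the condition $\neg\exists(I\hookrightarrow P)$. Let $\mathsf{c}_I$ be the conjunction of all such contributions. Then $\mathsf{c}_I$ is the (minimal) constraint-preserving application condition for $r$: for every object $X_0$ with $X_0\vDash\mathsf{c}_{\mathcal{N}}$ and every $\mathcal{M}$-morphism $m:I\hookrightarrow X_0$,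 the object $X_1$ obtained by the SqPO direct derivation of $X_0$ along $r$ at $m$ satisfies $X_1\vDash\mathsf{c}_{\mathcal{N}}$ if and only if $m\vDash\mathsf{c}_I$.
   Context: $\mathcal{M}$ is a class of monomorphisms. $\mathsf{c}_{\mathcal{N}}:=\bigwedge_{N\in\mathcal{N}}\neg\exists(\varnothing\hookrightarrow N)$; an object $X$ satisfies it iff no $N\in\mathcal{N}$ admits an $\mathcal{M}$-morphism $N\hookrightarrow X$. $\mathcal{S}_{\mathcal{N}}$ is the set of spans $(C_1\hookleftarrow D\hookrightarrow C_2)$ of $\mathcal{M}$-morphisms with $C_1,D,C_2\vDash\mathsf{c}_{\mathcal{N}}$ whose pushout is isomorphic to some $N\in\mathcal{N}$. For an $\mathcal{M}$-morphism $m:I\hookrightarrow X$ and $f:I\hookrightarrow P$ in $\mathcal{M}$, $m\vDash\exists(f)$ iff there is an $\mathcal{M}$-morphism $g:P\hookrightarrow X$ with $m=g\circ f$; $m\vDash\neg\mathsf{c}$ iff not $m\vDash\mathsf{c}$, and conjunction is interpreted componentwise. SqPO direct derivation (rules read right to left, from input $I$ to output $O$): given $m:I\hookrightarrow X_0$, form the final pullback complement $K\to\overline{X}_0\hookrightarrow X_0$ of $K\hookrightarrow I\hookrightarrow X_0$ (a pullback square $K\to\overline{X}_0\to X_0$, $K\to I\to X_0$ that is final among all pullback squares over $K\to I\to X_0$ in the sense of the universal property of FPCs), then $X_1$ is the pushout of $O\hookleftarrow K\to\overline{X}_0$. *)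

(* Defs.v *)
From Stdlib Require Import List.
Set Implicit Arguments.

(** * Categories (morphism equality is Leibniz equality) *)
Record Cat := {
  Ob :> Type;
  Hom : Ob -> Ob -> Type;
  idm : forall A, Hom A A;
  comp : forall A B C, Hom B C -> Hom A B -> Hom A C;
  comp_idl : forall A B (f : Hom A B), comp (idm B) f = f;
  comp_idr : forall A B (f : Hom A B), comp f (idm A) = f;
  comp_assoc : forall A B C D (f : Hom A B) (g : Hom B C) (h : Hom C D),
      comp h (comp g f) = comp (comp h g) f
}.
Arguments Hom {c} _ _.
Arguments idm {c} _.
Arguments comp {c A B C} _ _.
Notation "g \o f" := (comp g f) (at level 40, left associativity).

Section Cats.
Variable C : Cat.

Definition is_iso {A B : C} (f : Hom A B) : Prop :=
  exists g : Hom B A, g \o f = idm A /\ f \o g = idm B.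

Definition is_mono {A B : C} (f : Hom A B) : Prop :=
  forall Z (x y : Hom Z A), f \o x = f \o y -> x = y.

Definition is_epi {A B : C} (f : Hom A B) : Prop :=
  forall Z (x y : Hom B Z), x \o f = y \o f -> x = y.

Definition is_pullback {P B C' D : C} (p1 : Hom P B) (p2 : Hom P C')
    (f : Hom B D) (g : Hom C' D) : Prop :=
  f \o p1 = g \o p2 /\
  forall Z (z1 : Hom Z B) (z2 : Hom Z C'), f \o z1 = g \o z2 ->
    exists u : Hom Z P, (p1 \o u = z1 /\ p2 \o u = z2) /\
      forall v : Hom Z P, p1 \o v = z1 -> p2 \o v = z2 -> v = u.

Definition is_pushout {A B C' P : C} (f : Hom A B) (g : Hom A C')
    (i1 : Hom B P) (i2 : Hom C' P) : Prop :=
  i1 \o f = i2 \o g /\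
  forall Z (z1 : Hom B Z) (z2 : Hom C' Z), z1 \o f = z2 \o g ->
    exists u : Hom P Z, (u \o i1 = z1 /\ u \o i2 = z2) /\
      forall v : Hom P Z, v \o i1 = z1 -> v \o i2 = z2 -> v = u.

Definition MClass := forall A B : C, Hom A B -> Prop.

Variable M : MClass.
Arguments M {A B} _.

Definition is_FPC {A B C0 D : C} (a : Hom A B) (b : Hom B C0)
    (d : Hom A D) (c : Hom D C0) : Prop :=
  is_pullback a d b c /\
  forall A' D' (a' : Hom A' B) (d' : Hom A' D') (c' : Hom D' C0) (f : Hom A' A),
    is_pullback a' d' b c' -> a \o f = a' ->
    exists g : Hom D' D, (c \o g = c' /\ g \o d' = d \o f) /\
      forall h : Hom D' D, c \o h = c' -> h \o d' = d \o f -> h = g.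

Definition M_adhesive : Prop :=
  (forall A B (f : Hom A B), M f -> is_mono f) /\
  (forall A B (f : Hom A B), is_iso f -> M f) /\
  (forall A B D (f : Hom A B) (g : Hom B D), M f -> M g -> M (g \o f)) /\
  (forall A B D (f : Hom A B) (g : Hom B D), M (g \o f) -> M g -> M f) /\
  (forall B C' D (f : Hom B D) (g : Hom C' D), M g ->
      exists P (p1 : Hom P B) (p2 : Hom P C'), is_pullback p1 p2 f g) /\
  (forall P B C' D (p1 : Hom P B) (p2 : Hom P C') (f : Hom B D) (g : Hom C' D),
      is_pullback p1 p2 f g -> M g -> M p1) /\
  (forall A B C' (m : Hom A B) (f : Hom A C'), M m ->
      exists P (i1 : Hom B P) (i2 : Hom C' P), is_pushout m f i1 i2) /\
  (forall A B C' P (m : Hom A B) (f : Hom A C') (i1 : Hom B P) (i2 : Hom C' P),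
      is_pushout m f i1 i2 -> M m -> M i2) /\
  (forall A B C' D A' B' C'' D'
          (m : Hom A B) (f : Hom A C') (g : Hom B D) (n : Hom C' D)
          (m' : Hom A' B') (f' : Hom A' C'') (g' : Hom B' D') (n' : Hom C'' D')
          (a : Hom A' A) (b : Hom B' B) (c : Hom C'' C') (d : Hom D' D),
      is_pushout m f g n -> M m ->
      g' \o m' = n' \o f' ->
      m \o a = b \o m' -> f \o a = c \o f' ->
      g \o b = d \o g' -> n \o c = d \o n' ->
      is_pullback a m' m b -> is_pullback a f' f c ->
      M b -> M c -> M d ->
      (is_pushout m' f' g' n' <->
         (is_pullback b g' g d /\ is_pullback c n' n d))).

Definition finitary : Prop :=
  forall X : C, exists l : list {A : C & Hom A X},
    Forall (fun p : {A : C & Hom A X} => M (projT2 p)) l /\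
    forall A (m : Hom A X), M m ->
      exists p : {A0 : C & Hom A0 X}, In p l /\
        exists i : Hom A (projT1 p), is_iso i /\ projT2 p \o i = m.

Definition M_effective_unions : Prop :=
  forall A B C' D (b : Hom B D) (c : Hom C' D) (a1 : Hom A B) (a2 : Hom A C'),
    M b -> M c -> is_pullback a1 a2 b c ->
    forall E (e1 : Hom B E) (e2 : Hom C' E), is_pushout a1 a2 e1 e2 ->
    forall u : Hom E D, u \o e1 = b -> u \o e2 = c -> M u.

Definition M_initial (I0 : C) : Prop :=
  forall X : C, exists f : Hom I0 X, M f /\ forall g : Hom I0 X, g = f.

Definition epi_M_factorisation : Prop :=
  (forall A B (f : Hom A B),
      exists E (e : Hom A E) (m : Hom E B), is_epi e /\ M m /\ m \o e = f) /\
  (forall A B (f : Hom A B) E (e : Hom A E) (m : Hom E B)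
          E' (e' : Hom A E') (m' : Hom E' B),
      is_epi e -> M m -> m \o e = f ->
      is_epi e' -> M m' -> m' \o e' = f ->
      exists i : Hom E E', is_iso i /\ i \o e = e' /\ m' \o i = m).

Definition FPCs_exist : Prop :=
  forall A B C0 (a : Hom A B) (b : Hom B C0), M a -> M b ->
    exists D (d : Hom A D) (c : Hom D C0), is_FPC a b d c.

Definition M_stable_FPC : Prop :=
  forall A B C0 D (a : Hom A B) (b : Hom B C0) (d : Hom A D) (c : Hom D C0),
    is_FPC a b d c -> M a -> M b -> M c.

Variable NN : C -> Prop.

Definition sat_cN (X : C) : Prop :=
  forall N, NN N -> ~ exists f : Hom N X, M f.

Definition in_SN {D C1 C2 : C} (c1 : Hom D C1) (c2 : Hom D C2) : Prop :=
  M c1 /\ M c2 /\ sat_cN C1 /\ sat_cN D /\ sat_cN C2 /\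
  exists P (i1 : Hom C1 P) (i2 : Hom C2 P), is_pushout c1 c2 i1 i2 /\
    exists N, NN N /\ exists j : Hom P N, is_iso j.

Definition sat_cI {O K I X : C} (rO : Hom K O) (rI : Hom K I) (m : Hom I X)
    : Prop :=
  forall C1 C2 D (d1 : Hom D C1) (d2 : Hom D C2),
    in_SN d2 d1 ->
    forall (e2 : Hom C2 O) (eD : Hom D K), M e2 -> M eD ->
      is_pullback eD d2 rO e2 ->
    forall P (p1 : Hom C1 P) (pI : Hom I P), is_pushout d1 (rI \o eD) p1 pI ->
      sat_cN P ->
      ~ exists g : Hom P X, M g /\ g \o pI = m.

End Cats.
Arguments is_iso {C A B} _.
Arguments is_pullback {C P B C' D} _ _ _ _.
Arguments is_pushout {C A B C' P} _ _ _ _.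
Arguments is_FPC {C A B C0 D} _ _ _ _.
Arguments in_SN {C} M NN {D C1 C2} _ _.
Arguments sat_cI {C} M NN {O K I X} _ _ _.

(* Main.v *)
Require Import Defs.
Set Implicit Arguments.
Section H.
Variable C : Cat.

Lemma pb_sym {P B C' D : C} (p1 : Hom P B) (p2 : Hom P C') (f : Hom B D) (g : Hom C' D) :
  is_pullback p1 p2 f g -> is_pullback p2 p1 g f.
Proof.
  intros [Hc Hu]. split. symmetry; exact Hc.
  intros Z z1 z2 E. destruct (Hu Z z2 z1 (eq_sym E)) as [u [[E1 E2] Hv]].
  exists u. split. split; assumption. intros v V1 V2. apply Hv; assumption.
Qed.

Lemma po_sym {A B C' P : C} (f : Hom A B) (g : Hom A C') (i1 : Hom B P) (i2 : Hom C' P) :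
  is_pushout f g i1 i2 -> is_pushout g f i2 i1.
Proof.
  intros [Hc Hu]. split. symmetry; exact Hc.
  intros Z z1 z2 E. destruct (Hu Z z2 z1 (eq_sym E)) as [u [[E1 E2] Hv]].
  exists u. split. split; assumption. intros v V1 V2. apply Hv; assumption.
Qed.

Lemma pb_joint {P B C' D : C} (p1 : Hom P B) (p2 : Hom P C') (f : Hom B D) (g : Hom C' D) :
  is_pullback p1 p2 f g -> forall Z (x y : Hom Z P), p1 \o x = p1 \o y -> p2 \o x = p2 \o y -> x = y.
Proof.
  intros [Hc Hu] Z x y E1 E2.
  assert (E : f \o (p1 \o x) = g \o (p2 \o x)).
  { rewrite !comp_assoc, Hc. reflexivity. }
  destruct (Hu Z _ _ E) as [u [_ Hv]].
  rewrite (Hv x eq_refl eq_refl). symmetry. apply Hv; symmetry; assumption.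
Qed.

Lemma iso_id (A : C) : is_iso (idm A).
Proof. exists (idm A). rewrite comp_idl. split; reflexivity. Qed.

Lemma pb_postmono {P B C' D E : C} (p1 : Hom P B) (p2 : Hom P C') (f : Hom B D) (g : Hom C' D)
  (k : Hom D E) : is_pullback p1 p2 f g -> is_mono C k -> is_pullback p1 p2 (k \o f) (k \o g).
Proof.
  intros [Hc Hu] Hk. split.
  - rewrite <- !comp_assoc, Hc. reflexivity.
  - intros Z z1 z2 E0. apply Hu. apply Hk. rewrite !comp_assoc. exact E0.
Qed.

Lemma po_M_pb (M : MClass C) (Hadh : M_adhesive M) {A B C' D : C}
  (m : Hom A B) (f : Hom A C') (g : Hom B D) (n : Hom C' D) :
  is_pushout m f g n -> M _ _ m -> is_pullback m f g n.
Proof.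
  intros Hpo Hm.
  destruct Hadh as [Hmono [Hiso [Hcomp [Hdec [Hpbex [Hpbst [Hpoex [Hpost HvK]]]]]]]].
  assert (P1 : is_pullback (idm A) (idm A) m m).
  { split. reflexivity. intros Z z1 z2 E. exists z1.
    split. split. apply comp_idl. rewrite comp_idl. apply (Hmono _ _ _ Hm). exact E.
    intros v V1 _. rewrite comp_idl in V1. exact V1. }
  assert (P2 : is_pullback (idm A) f f (idm C')).
  { split. rewrite comp_idl, comp_idr. reflexivity.
    intros Z z1 z2 E. exists z1. split. split. apply comp_idl. rewrite comp_idl in E. exact E.
    intros v V1 _. rewrite comp_idl in V1. exact V1. }
  assert (P3 : is_pushout (idm A) f f (idm C')).
  { split. rewrite comp_idl, comp_idr. reflexivity.
    intros Z z1 z2 E. exists z2. split. split. rewrite comp_idr in E. symmetry. exact E.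
    apply comp_idr. intros v _ V2. rewrite comp_idr in V2. exact V2. }
  assert (E1 : f \o idm A = idm C' \o f) by (rewrite comp_idl, comp_idr; reflexivity).
  assert (Hn : M _ _ n) by exact (Hpost _ _ _ _ _ _ _ _ Hpo Hm).
  assert (Hid : M _ _ (idm C')) by (apply Hiso, iso_id).
  exact (proj1 (proj1 (HvK A B C' D A A C' C' m f g n (idm A) f f (idm C') (idm A) m (idm C') n
     Hpo Hm E1 eq_refl E1 (proj1 Hpo) eq_refl P1 P2 Hm Hid Hn) P3)).
Qed.
End H.

Theorem corollary1 (C : Cat) (M : MClass C)
  (Hadh : M_adhesive M) (Hfin : finitary M) (Heff : M_effective_unions M)
  (I0 : C) (Hinit : M_initial M I0) (Hfact : epi_M_factorisation M)
  (Hfpc : FPCs_exist M) (Hstab : M_stable_FPC M)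
  (NN : C -> Prop)
  (O K I : C) (rO : Hom K O) (rI : Hom K I) :
  M _ _ rO -> M _ _ rI ->
  sat_cN M NN O -> sat_cN M NN K -> sat_cN M NN I ->
  forall (X0 : C) (m : Hom I X0), sat_cN M NN X0 -> M _ _ m ->
  forall (Xb : C) (kb : Hom K Xb) (xb : Hom Xb X0), is_FPC rI m kb xb ->
  forall (X1 : C) (o1 : Hom O X1) (x1 : Hom Xb X1), is_pushout rO kb o1 x1 ->
  (sat_cN M NN X1 <-> sat_cI M NN rO rI m).
Proof.
  intros HrO HrI satO satK satI X0 m satX0 Hm Xb kb xb HF X1 o1 x1 Hpo.
  pose proof Hadh as Hadh'.
  destruct Hadh' as [Hmono [Hiso [Hcomp [Hdec [Hpbex [Hpbst [Hpoex [Hpost HvK]]]]]]]].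
  assert (sat_sub : forall (A B : C) (j : Hom A B), M _ _ j -> sat_cN M NN B -> sat_cN M NN A).
  { intros A B j Hj HB N HN [f Hf]. apply (HB N HN). exists (j \o f). apply Hcomp; assumption. }
  pose proof (proj1 HF) as HpbF.
  assert (Hxb : M _ _ xb) by exact (Hstab _ _ _ _ _ _ _ _ HF HrI Hm).
  assert (Hkb : M _ _ kb) by exact (Hpbst _ _ _ _ _ _ _ _ (pb_sym HpbF) Hm).
  assert (Hx1 : M _ _ x1) by exact (Hpost _ _ _ _ _ _ _ _ Hpo HrO).
  assert (Ho1 : M _ _ o1) by exact (Hpost _ _ _ _ _ _ _ _ (po_sym Hpo) Hkb).
  pose proof (po_M_pb Hadh Hpo HrO) as HpbK.
  split.
  - intros Hsat1 C1 C2 D d1 d2 HSN e2 eD He2 HeD Hpb P p1 pI HpoP satP [g [Hg Hgm]].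
    destruct HSN as [Hd2 [Hd1 [sC2 [sD [sC1 [P' [i1 [i2 [HpoN [N [HN [j Hj]]]]]]]]]]]].
    pose proof (po_M_pb Hadh HpoP Hd1) as HpbP.
    pose proof (pb_postmono HpbP (Hmono _ _ _ Hg)) as HpbP'.
    rewrite Hgm in HpbP'.
    destruct (proj2 HF D C1 (rI \o eD) d1 (g \o p1) eD (pb_sym HpbP') eq_refl)
      as [h [[Eh1 Eh2] _]].
    assert (Hp1 : M _ _ p1).
    { apply (Hpost _ _ _ _ _ _ _ _ (po_sym HpoP)). apply Hcomp; assumption. }
    assert (Hh : M _ _ h).
    { apply (Hdec _ _ _ h xb). rewrite Eh1. apply Hcomp; assumption. assumption. }
    assert (Hcomm : (o1 \o e2) \o d2 = (x1 \o h) \o d1).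
    { rewrite <- !comp_assoc, <- (proj1 Hpb), Eh2, !comp_assoc, (proj1 Hpo). reflexivity. }
    destruct (proj2 HpoN X1 (o1 \o e2) (x1 \o h) Hcomm) as [u [[Eu1 Eu2] _]].
    assert (HpbU : is_pullback d2 d1 (o1 \o e2) (x1 \o h)).
    { split. exact Hcomm.
      intros Z z1 z2 EZ.
      rewrite <- !comp_assoc in EZ.
      destruct (proj2 HpbK Z (e2 \o z1) (h \o z2) EZ) as [k [[Ek1 Ek2] Uk]].
      destruct (proj2 Hpb Z k z1 Ek1) as [w [[Ew1 Ew2] Uw]].
      exists w. split. split. exact Ew2.
      apply (Hmono _ _ _ Hh). rewrite comp_assoc, Eh2, <- comp_assoc, Ew1. exact Ek2.
      intros v V1 V2. apply Uw; [| exact V1].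
      apply Uk.
      + rewrite comp_assoc, (proj1 Hpb), <- comp_assoc, V1. reflexivity.
      + rewrite comp_assoc, <- Eh2, <- comp_assoc, V2. reflexivity. }
    assert (Hu : M _ _ u).
    { exact (Heff _ _ _ _ (o1 \o e2) (x1 \o h) d2 d1 (Hcomp _ _ _ _ _ He2 Ho1)
        (Hcomp _ _ _ _ _ Hh Hx1) HpbU _ _ _ HpoN u Eu1 Eu2). }
    destruct Hj as [jinv [Ej1 Ej2]].
    apply (Hsat1 N HN). exists (u \o jinv). apply Hcomp; [| exact Hu].
    apply Hiso. exists j. split; assumption.
  - intros HcI N HN [f Hf].
    destruct (Hpbex _ _ _ o1 f Hf) as [C2 [e2 [c2 HC2]]].
    destruct (Hpbex _ _ _ x1 f Hf) as [C1 [h [c1 HC1]]].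
    assert (He2 : M _ _ e2) by exact (Hpbst _ _ _ _ _ _ _ _ HC2 Hf).
    assert (Hh : M _ _ h) by exact (Hpbst _ _ _ _ _ _ _ _ HC1 Hf).
    destruct (Hpbex _ _ _ rO e2 He2) as [D [a [m' HD]]].
    assert (Ef : x1 \o (kb \o a) = f \o (c2 \o m')).
    { rewrite comp_assoc, <- (proj1 Hpo), <- comp_assoc, (proj1 HD), comp_assoc, (proj1 HC2),
        comp_assoc. reflexivity. }
    destruct (proj2 HC1 D (kb \o a) (c2 \o m') Ef) as [f' [[Ef1 Ef2] _]].
    assert (HpbA : is_pullback a f' kb h).
    { split. symmetry. exact Ef1.
      intros Z z1 z2 EZ.
      assert (EZ2 : o1 \o (rO \o z1) = f \o (c1 \o z2)).
      { rewrite comp_assoc, (proj1 Hpo), <- comp_assoc, EZ, comp_assoc, (proj1 HC1),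
          comp_assoc. reflexivity. }
      destruct (proj2 HC2 Z _ _ EZ2) as [w [[Ew1 Ew2] Uw]].
      destruct (proj2 HD Z z1 w (eq_sym Ew1)) as [v [[Ev1 Ev2] Uv]].
      exists v. split. split. exact Ev1.
      apply (pb_joint HC1).
      + rewrite comp_assoc, Ef1, <- comp_assoc, Ev1. exact EZ.
      + rewrite comp_assoc, Ef2, <- comp_assoc, Ev2. exact Ew2.
      + intros v' V1 V2. apply Uv; [exact V1|]. apply Uw.
        * rewrite comp_assoc, <- (proj1 HD), <- comp_assoc, V1. reflexivity.
        * rewrite comp_assoc, <- Ef2, <- comp_assoc, V2. reflexivity. }
    assert (HpoT : is_pushout m' f' c2 c1).
    { apply (proj2 (HvK _ _ _ _ _ _ _ _ rO kb o1 x1 m' f' c2 c1 a e2 h f Hpo HrO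
        (eq_sym Ef2) (proj1 HD) (eq_sym Ef1) (proj1 HC2) (proj1 HC1) HD HpbA He2 Hh Hf)).
      split; assumption. }
    assert (Hm' : M _ _ m') by exact (Hpbst _ _ _ _ _ _ _ _ (pb_sym HD) HrO).
    assert (Hf' : M _ _ f') by exact (Hpbst _ _ _ _ _ _ _ _ (pb_sym HpbA) Hkb).
    assert (Ha : M _ _ a) by exact (Hpbst _ _ _ _ _ _ _ _ HD He2).
    destruct (Hpoex _ _ _ f' (rI \o a) Hf') as [P [p1 [pI HpoP]]].
    assert (Eg : (xb \o h) \o f' = m \o (rI \o a)).
    { rewrite <- comp_assoc, Ef1, !comp_assoc, (proj1 HpbF). reflexivity. }
    destruct (proj2 HpoP X0 (xb \o h) m Eg) as [g [[Eg1 Eg2] _]].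
    assert (HpbG : is_pullback f' (rI \o a) (xb \o h) m).
    { split. exact Eg.
      intros Z z1 z2 EZ.
      rewrite <- comp_assoc in EZ.
      destruct (proj2 HpbF Z z2 (h \o z1) (eq_sym EZ)) as [k [[Ek1 Ek2] Uk]].
      destruct (proj2 HpbA Z k z1 Ek2) as [w [[Ew1 Ew2] Uw]].
      exists w. split. split. exact Ew2.
      rewrite <- comp_assoc, Ew1. exact Ek1.
      intros v V1 V2. apply Uw; [| exact V1].
      apply Uk.
      + rewrite comp_assoc. exact V2.
      + rewrite comp_assoc, (proj1 HpbA), <- comp_assoc, V1. reflexivity. }
    assert (Hg : M _ _ g).
    { exact (Heff _ _ _ _ (xb \o h) m f' (rI \o a) (Hcomp _ _ _ _ _ Hh Hxb)
        Hm HpbG _ _ _ HpoP g Eg1 Eg2). }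
    refine (HcI C1 C2 D f' m' _ e2 a He2 Ha HD P p1 pI HpoP _ _).
    + split; [exact Hm'|]. split; [exact Hf'|].
      split; [exact (sat_sub _ _ _ He2 satO)|].
      split; [exact (sat_sub _ _ _ Ha satK)|].
      split; [apply (sat_sub _ _ (xb \o h)); [apply Hcomp; assumption | exact satX0]|].
      exists N, c2, c1. split; [exact HpoT|]. exists N. split; [exact HN|].
      exists (idm N). apply iso_id.
    + exact (sat_sub _ _ _ Hg satX0).
    + exists g. split; assumption.
Qed.
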